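(* Let $I$ be a nonempty set and let $A$ be a topologically independent subset of $(\mathbb{C}^\times)^I$. Then for every $i\in I$ the set $\{a\in A : |a(i)|\neq 1\}$ is finite.
   Context: $\mathbb{C}^\times$ is the multiplicative group of nonzero complex numbers with the Euclidean topology; $(\mathbb{C}^\times)^I$ carries the product topology and coordinatewise multiplication, with neutral element $e$ the constant function $1$. A subset $A$ of an abelian topological group $G$ (multiplicative notation, neutral element $e$) is topologically independent if $e\notin A$ and for every neighborhood $W$ of $e$ there is a neighborhood $U$ of $e$ such that for every finite $F\subseteq A$ and every family of integers $\{z_a: a\in F\}$, the condition $\prod_{a\in F}a^{z_a}\in U$ implies $a^{z_a}\in W$ for all $a\in F$. *)

(* Defs.v *)
From Stdlib Require Import Reals ZArith List.
From Coquelicot Require Export Coquelicot.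
Open Scope R_scope.

Fixpoint Cpown (x : C) (n : nat) : C :=
  match n with O => RtoC 1 | S m => Cmult x (Cpown x m) end.

Definition Czpow (x : C) (z : Z) : C :=
  match z with
  | Z0 => RtoC 1
  | Zpos p => Cpown x (Pos.to_nat p)
  | Zneg p => Cinv (Cpown x (Pos.to_nat p))
  end.

(* elements of (C^x)^I are functions I -> C with nonzero values *)
Definition in_group {I : Type} (x : I -> C) : Prop := forall i, x i <> RtoC 0.

Definition e_grp {I : Type} : I -> C := fun _ => RtoC 1.

(* W is a neighborhood of e in (C^x)^I (product of Euclidean topologies):
   it contains a basic open set {x | |x j - 1| < eps for j in finite J}. *)
Definition nbhd_e {I : Type} (W : (I -> C) -> Prop) : Prop :=
  exists (J : list I) (eps : R), 0 < eps /\
    forall x, in_group x -> (forall j, In j J -> Cmod (Cminus (x j) (RtoC 1)) < eps) -> W x.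

(* coordinatewise product  prod_{a in F} a^{z_a}  for a finite F (list without duplicates) *)
Definition prod_pow {I : Type} (F : list (I -> C)) (z : (I -> C) -> Z) : I -> C :=
  fun i => fold_right (fun a acc => Cmult (Czpow (a i) (z a)) acc) (RtoC 1) F.

Definition zpow_grp {I : Type} (a : I -> C) (k : Z) : I -> C := fun i => Czpow (a i) k.

Definition top_indep {I : Type} (A : (I -> C) -> Prop) : Prop :=
  ~ A e_grp /\
  forall W, nbhd_e W -> exists U, nbhd_e U /\
    forall (F : list (I -> C)) (z : (I -> C) -> Z),
      NoDup F -> (forall a, In a F -> A a) ->
      U (prod_pow F z) -> forall a, In a F -> W (zpow_grp a (z a)).

(* Main.v *)
Require Import Defs.
From Stdlib Require Import Reals ZArith List Lia Lra Classical ClassicalEpsilon FunctionalExtensionality.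
From Coquelicot Require Import Coquelicot.
Open Scope R_scope.


Definition polar (u t : R) : C := (exp u * cos t, exp u * sin t).

Lemma polar_mult u1 t1 u2 t2 : Cmult (polar u1 t1) (polar u2 t2) = polar (u1+u2) (t1+t2).
Proof.
  unfold polar, Cmult; simpl. rewrite exp_plus, cos_plus, sin_plus. f_equal; ring.
Qed.

Lemma polar_0 : polar 0 0 = RtoC 1.
Proof. unfold polar, RtoC. rewrite exp_0, cos_0, sin_0. f_equal; ring. Qed.

Lemma polar_neq0 u t : polar u t <> RtoC 0.
Proof.
  intro H. unfold polar, RtoC in H. injection H as H1 H2.
  pose proof (exp_pos u). pose proof (sin2_cos2 t). unfold Rsqr in *.
  assert (cos t = 0) by (apply Rmult_integral in H1; destruct H1; [lra|auto]).
  assert (sin t = 0) by (apply Rmult_integral in H2; destruct H2; [lra|auto]).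
  rewrite H3, H4 in H0. lra.
Qed.

Lemma polar_inv u t : Cinv (polar u t) = polar (-u) (-t).
Proof.
  assert (H : Cmult (polar u t) (polar (-u) (-t)) = RtoC 1).
  { rewrite polar_mult. replace (u + - u) with 0 by ring. replace (t + - t) with 0 by ring.
    apply polar_0. }
  rewrite <- (Cmult_1_r (Cinv (polar u t))). rewrite <- H.
  rewrite Cmult_assoc. rewrite Cinv_l by apply polar_neq0. apply Cmult_1_l.
Qed.

Lemma Cpown_polar u t n : Cpown (polar u t) n = polar (INR n * u) (INR n * t).
Proof.
  induction n as [|n IH]; simpl Cpown.
  - simpl INR. rewrite !Rmult_0_l. symmetry; apply polar_0.
  - rewrite IH, polar_mult, S_INR. f_equal; ring.
Qed.

Lemma Czpow_polar u t d : Czpow (polar u t) d = polar (IZR d * u) (IZR d * t).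
Proof.
  destruct d as [|p|p]; simpl Czpow.
  - rewrite !Rmult_0_l. symmetry; apply polar_0.
  - rewrite Cpown_polar. rewrite INR_IZR_INZ, positive_nat_Z. reflexivity.
  - rewrite Cpown_polar, polar_inv. rewrite INR_IZR_INZ, positive_nat_Z.
    rewrite <- (Pos2Z.opp_pos p), opp_IZR. f_equal; ring.
Qed.

Lemma Cmod_polar u t : Cmod (polar u t) = exp u.
Proof.
  unfold Cmod, polar; cbn [fst snd].
  replace ((exp u * cos t) ^ 2 + (exp u * sin t) ^ 2) with (exp u ^ 2).
  - apply sqrt_pow2. left; apply exp_pos.
  - pose proof (sin2_cos2 t). unfold Rsqr in H. 
    replace ((exp u * cos t) ^ 2 + (exp u * sin t) ^ 2) with (exp u ^ 2 * (sin t * sin t + cos t * cos t)) by ring.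
    rewrite H; ring.
Qed.

Lemma angle_exists (x y : R) : x^2 + y^2 = 1 -> exists t, cos t = x /\ sin t = y.
Proof.
  intro H.
  assert (Hx : -1 <= x <= 1) by (split; nra).
  assert (Hs : sqrt (1 - x²) = Rabs y).
  { rewrite <- sqrt_Rsqr_abs. f_equal. unfold Rsqr. lra. }
  destruct (Rle_or_lt 0 y) as [Hy|Hy].
  - exists (acos x). rewrite cos_acos, sin_acos by auto. rewrite Hs, Rabs_right by lra. auto.
  - exists (- acos x). rewrite cos_neg, sin_neg, cos_acos, sin_acos by auto.
    rewrite Hs, Rabs_left by lra. split; auto; ring.
Qed.

Lemma polar_exists (w : C) : w <> RtoC 0 -> exists u t, w = polar u t.
Proof.
  intro Hw. destruct w as [x y].
  assert (Hm : 0 < Cmod (x, y)).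
  { apply Cmod_gt_0. auto. }
  set (m := Cmod (x,y)) in *.
  assert (Hm2 : m ^ 2 = x^2 + y^2).
  { unfold m, Cmod. simpl fst; simpl snd. rewrite pow2_sqrt; auto. nra. }
  destruct (angle_exists (x / m) (y / m)) as [t [Hc Hs]].
  { field_simplify; [|lra]. rewrite <- Hm2. field. lra. }
  exists (ln m), t. unfold polar. rewrite exp_ln by auto. rewrite Hc, Hs.
  f_equal; field; lra.
Qed.



Lemma Rabs_le_inv a b : Rabs a <= b -> -b <= a <= b.
Proof. unfold Rabs; destruct (Rcase_abs a); intros; split; lra. Qed.

Lemma polar_minus1 U T : Cminus (polar U T) (RtoC 1) = (exp U * cos T - 1, exp U * sin T).
Proof. unfold Cminus, Cplus, Copp, RtoC, polar; simpl. f_equal; ring. Qed.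

Lemma Cmod_le_abs x y : Cmod (x, y) <= Rabs x + Rabs y.
Proof.
  unfold Cmod; cbn [fst snd].
  rewrite <- (sqrt_Rsqr (Rabs x + Rabs y)) by (pose proof (Rabs_pos x); pose proof (Rabs_pos y); lra).
  apply sqrt_le_1_alt. unfold Rsqr.
  pose proof (Rabs_pos x); pose proof (Rabs_pos y).
  replace (x^2) with (Rabs x * Rabs x) by (rewrite <- Rabs_mult, Rabs_right by nra; ring).
  replace (y^2) with (Rabs y * Rabs y) by (rewrite <- Rabs_mult, Rabs_right by nra; ring).
  nra.
Qed.

Lemma abs_sin_le_pos x : 0 <= x -> Rabs (sin x) <= x.
Proof.
  intro H. destruct (Req_dec x 0) as [->|Hn]. { rewrite sin_0, Rabs_R0; lra. }
  pose proof (sin_lt_x x ltac:(lra)). pose proof (SIN_bound x).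
  apply Rabs_le. split; [|lra].
  destruct (Rle_or_lt 1 x); [lra|].
  pose proof PI2_1. pose proof (sin_ge_0 x ltac:(lra) ltac:(lra)). lra.
Qed.

Lemma abs_sin_le x : Rabs (sin x) <= Rabs x.
Proof.
  destruct (Rle_or_lt 0 x).
  - rewrite (Rabs_right x) by lra. now apply abs_sin_le_pos.
  - rewrite (Rabs_left x) by lra. replace x with (- (-x)) at 1 by ring.
    rewrite sin_neg, Rabs_Ropp. apply abs_sin_le_pos; lra.
Qed.

Lemma cos_1_bound x : Rabs (cos x - 1) <= x * x / 2.
Proof.
  replace x with (2 * (x/2)) at 1 by field. rewrite cos_2a_sin.
  pose proof (abs_sin_le (x/2)).
  assert (sin (x/2) * sin (x/2) <= (x/2)*(x/2)).
  { apply Rsqr_le_abs_1 in H. unfold Rsqr in H. auto. }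
  rewrite Rabs_left1 by nra. nra.
Qed.

Lemma exp_1_bound U : Rabs U <= /2 -> Rabs (exp U - 1) <= 2 * Rabs U.
Proof.
  intro H. apply Rabs_le_inv in H.
  pose proof (exp_ineq1_le U). pose proof (exp_ineq1_le (-U)). rewrite exp_Ropp in H1.
  pose proof (exp_pos U).
  assert (exp U * (1 - U) <= 1).
  { apply (Rmult_le_compat_l (exp U)) in H1; [|lra]. rewrite Rinv_r in H1 by lra. lra. }
  apply Rabs_le. destruct (Rle_or_lt 0 U).
  - rewrite (Rabs_right U) by lra. split; nra.
  - rewrite (Rabs_left U) by lra. split; nra.
Qed.

Lemma near_lemma eps : 0 < eps -> exists d, 0 < d /\ forall U T, Rabs U < d -> Rabs T < d ->
  Cmod (Cminus (polar U T) (RtoC 1)) < eps.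
Proof.
  intro He. exists (Rmin (/2) (eps / 8)). split. { apply Rmin_pos; lra. }
  intros U T HU HT. pose proof (Rmin_l (/2) (eps/8)). pose proof (Rmin_r (/2) (eps/8)).
  rewrite polar_minus1. eapply Rle_lt_trans. apply Cmod_le_abs.
  pose proof (exp_1_bound U ltac:(lra)). pose proof (cos_1_bound T). pose proof (abs_sin_le T).
  assert (HeU : exp U <= 2) by (apply Rabs_le_inv in H1; pose proof (Rabs_pos U); lra).
  pose proof (exp_pos U).
  replace (exp U * cos T - 1) with (exp U * (cos T - 1) + (exp U - 1)) by ring.
  eapply Rle_lt_trans. apply Rplus_le_compat_r. apply Rabs_triang.
  rewrite !Rabs_mult, (Rabs_right (exp U)) by lra.
  assert (T * T / 2 <= Rabs T / 4).
  { pose proof (Rabs_pos T). replace (T*T) with (Rabs T * Rabs T) by (rewrite <- Rabs_mult; apply Rabs_right; nra). nra. }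
  pose proof (Rabs_pos (cos T - 1)). pose proof (Rabs_pos (sin T)). pose proof (Rabs_pos T).
  pose proof (Rabs_pos U).
  assert (exp U * Rabs (cos T - 1) <= 2 * (Rabs T / 4)) by nra.
  assert (exp U * Rabs (sin T) <= 2 * Rabs T) by nra.
  lra.
Qed.

Lemma far_lemma U T : 1 <= Rabs U -> /2 <= Cmod (Cminus (polar U T) (RtoC 1)).
Proof.
  intro H. rewrite polar_minus1.
  assert (Rabs (exp U - 1) <= Cmod (exp U * cos T - 1, exp U * sin T)).
  { rewrite <- sqrt_Rsqr_abs. unfold Cmod; cbn [fst snd]. apply sqrt_le_1_alt.
    pose proof (exp_pos U). pose proof (sin2_cos2 T). pose proof (COS_bound T). unfold Rsqr in *.
    replace ((exp U * cos T - 1) ^ 2 + (exp U * sin T) ^ 2) with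
      (exp U * exp U * (sin T * sin T + cos T * cos T) - 2 * exp U * cos T + 1) by ring.
    rewrite H1. nra. }
  eapply Rle_trans; [|apply H0].
  destruct (Rle_or_lt 0 U) as [HU|HU].
  - rewrite Rabs_right in H by lra. pose proof (exp_ineq1_le U). rewrite Rabs_right; lra.
  - rewrite Rabs_left in H by lra. pose proof (exp_ineq1_le (-U)) as H1. rewrite exp_Ropp in H1.
    pose proof (exp_pos U).
    assert (exp U * 2 <= 1).
    { apply (Rmult_le_compat_l (exp U)) in H1; [|lra]. rewrite Rinv_r in H1 by lra. nra. }
    rewrite Rabs_left; lra.
Qed.


Fixpoint sumv {T} (F : list T) (v : list Z) (c : T -> R) : R :=
  match F, v with b :: F', x :: v' => IZR x * c b + sumv F' v' c | _, _ => 0 end.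

Fixpoint subZ (v1 v2 : list Z) : list Z :=
  match v1, v2 with x :: a, y :: b => (x - y)%Z :: subZ a b | _, _ => nil end.

Lemma subZ_length v1 v2 : length v1 = length v2 -> length (subZ v1 v2) = length v1.
Proof. revert v2; induction v1; destruct v2; simpl; intros; try lia. f_equal. apply IHv1; lia. Qed.

Lemma sumv_sub {T} (F : list T) v1 v2 c : length v1 = length v2 ->
  sumv F (subZ v1 v2) c = sumv F v1 c - sumv F v2 c.
Proof.
  revert v1 v2; induction F as [|b F IH]; intros v1 v2 H; simpl.
  - destruct (subZ v1 v2); ring.
  - destruct v1 as [|x v1]; destruct v2 as [|y v2]; simpl in *; try lia; try ring.
    rewrite IH by lia. rewrite minus_IZR. ring.
Qed.

Lemma subZ_nonzero v1 v2 : length v1 = length v2 -> v1 <> v2 ->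
  exists x, In x (subZ v1 v2) /\ x <> 0%Z.
Proof.
  revert v2; induction v1 as [|x v1 IH]; intros v2 Hl Hn; destruct v2 as [|y v2]; simpl in *; try lia.
  - congruence.
  - destruct (Z.eq_dec x y) as [->|Hxy].
    + destruct (IH v2) as [z [Hz1 Hz2]]; [lia|congruence|]. exists z; auto.
    + exists (x - y)%Z; split; auto; lia.
Qed.

Lemma sumv_bound {T} (F : list T) v c Mr L : 0 <= L -> 0 <= Mr ->
  (forall x, In x v -> 0 <= IZR x <= Mr) -> (forall a, In a F -> Rabs (c a) <= L) ->
  Rabs (sumv F v c) <= INR (length F) * (Mr * L).
Proof.
  intros HL0 HM0; revert v; induction F as [|b F IH]; intros v Hv HL; simpl length.
  - simpl. rewrite Rabs_R0; lra.
  - pose proof (pos_INR (length F)). rewrite S_INR.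
    destruct v as [|x v]; simpl sumv.
    + rewrite Rabs_R0. assert (0 <= Mr*L) by (apply Rmult_le_pos; auto). nra.
    + eapply Rle_trans. apply Rabs_triang.
      assert (Rabs (sumv F v c) <= INR (length F) * (Mr * L)).
      { apply IH; auto. intros; apply Hv; simpl; auto. intros; apply HL; simpl; auto. }
      assert (Rabs (IZR x * c b) <= Mr * L).
      { rewrite Rabs_mult. destruct (Hv x (or_introl eq_refl)).
        rewrite (Rabs_right (IZR x)) by lra. pose proof (HL b (or_introl eq_refl)).
        apply Rmult_le_compat; auto. apply Rabs_pos. }
      lra.
Qed.

Lemma finite_bound {X} (l : list X) (g : X -> R) : exists L, forall x, In x l -> g x <= L.
Proof.
  induction l as [|a l [L HL]].
  - exists 0. intros x [].
  - exists (Rmax (g a) L). intros x [<-|Hx]. apply Rmax_l. eapply Rle_trans. apply HL; auto. apply Rmax_r.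
Qed.

Fixpoint prodlist {X} (s : list X) (n : nat) : list (list X) :=
  match n with O => nil :: nil | S n' => flat_map (fun k => map (cons k) (prodlist s n')) s end.

Lemma flat_cons_length {X} (s : list X) (L : list (list X)) :
  length (flat_map (fun k => map (cons k) L) s) = (length s * length L)%nat.
Proof. induction s as [|k s IH]; simpl; auto. rewrite length_app, length_map, IH. lia. Qed.

Lemma prodlist_length {X} (s : list X) n : length (prodlist s n) = (length s ^ n)%nat.
Proof. induction n as [|n IH]; simpl; auto. rewrite flat_cons_length, IH. lia. Qed.

Lemma prodlist_In {X} (s : list X) n l : length l = n -> (forall x, In x l -> In x s) ->
  In l (prodlist s n).
Proof.
  revert l; induction n as [|n IH]; intros l Hl Hs.
  - destruct l; simpl in *; try lia; auto.
  - destruct l as [|x l]; simpl in *; try lia. apply in_flat_map. exists x. split; auto.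
    apply in_map. apply IH; auto.
Qed.

Lemma prodlist_In_inv {X} (s : list X) n l : In l (prodlist s n) ->
  length l = n /\ (forall x, In x l -> In x s).
Proof.
  revert l; induction n as [|n IH]; intros l Hl; simpl in Hl.
  - destruct Hl as [<-|[]]. simpl; split; auto. intros _ [].
  - apply in_flat_map in Hl. destruct Hl as [k [Hk Hm]]. apply in_map_iff in Hm.
    destruct Hm as [l' [<- Hl']]. destruct (IH l' Hl') as [H1 H2]. simpl. split; [lia|].
    intros x [<-|Hx]; auto.
Qed.



Lemma NoDup_map_inj {X Y} (f : X -> Y) l : NoDup l ->
  (forall x y, In x l -> In y l -> f x = f y -> x = y) -> NoDup (map f l).
Proof.
  induction 1 as [|x l Hx Hl IH]; intros Hinj; simpl; constructor.
  - intro H. apply in_map_iff in H. destruct H as [y [Hy Hyl]].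
    assert (y = x) by (apply Hinj; simpl; auto). subst; contradiction.
  - apply IH. intros; apply Hinj; simpl; auto.
Qed.

Lemma flat_cons_NoDup {X} (s : list X) (L : list (list X)) : NoDup s -> NoDup L ->
  NoDup (flat_map (fun k => map (cons k) L) s).
Proof.
  intros Hs HL. induction Hs as [|k s Hk Hs IHs]; simpl; [constructor|].
  apply NoDup_app; auto.
  - apply NoDup_map_inj; auto. intros a b _ _ H; injection H; auto.
  - intros a Ha Hb. apply in_map_iff in Ha. destruct Ha as [l [<- _]].
    apply in_flat_map in Hb. destruct Hb as [k' [Hk' Hm]]. apply in_map_iff in Hm.
    destruct Hm as [l' [Heq _]]. injection Heq as -> _. contradiction.
Qed.

Lemma prodlist_NoDup {X} (s : list X) n : NoDup s -> NoDup (prodlist s n).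
Proof.
  intro Hs. induction n as [|n IH]; simpl.
  - constructor; [intros []|constructor].
  - apply flat_cons_NoDup; auto.
Qed.

Lemma PH {X Y} (f : X -> Y) (l : list X) (l' : list Y) : NoDup l ->
  (forall x, In x l -> In (f x) l') -> (length l' < length l)%nat ->
  exists x y, In x l /\ In y l /\ x <> y /\ f x = f y.
Proof.
  intros Hl Hin Hlen. apply NNPP; intro Hn.
  assert (NoDup (map f l)).
  { apply NoDup_map_inj; auto. intros x y Hx Hy Hf. apply NNPP; intro Hxy.
    apply Hn; exists x, y; auto. }
  assert (length (map f l) <= length l')%nat.
  { apply NoDup_incl_length; auto. intros y Hy. apply in_map_iff in Hy.
    destruct Hy as [x [<- Hx]]; auto. }
  rewrite length_map in H0. lia.
Qed.

Lemma map_eq_In {X Y} (f h : X -> Y) l x : map f l = map h l -> In x l -> f x = h x.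
Proof.
  induction l as [|a l IH]; simpl; intros H Hx; [destruct Hx|].
  injection H as H1 H2. destruct Hx as [<-|Hx]; auto.
Qed.



Lemma up_pos q : 0 <= q -> (0 < up q)%Z.
Proof. intro H. destruct (archimed q). apply lt_0_IZR. lra. Qed.

Lemma INR_Z2N z : (0 <= z)%Z -> INR (Z.to_nat z) = IZR z.
Proof. intro H. rewrite INR_IZR_INZ, Z2Nat.id; auto. Qed.

Lemma P0 {T} (F : list T) (r : nat) (c : nat -> T -> R) (d : R) : 0 < d ->
  (r < length F)%nat ->
  exists v, length v = length F /\ (exists x, In x v /\ x <> 0%Z) /\
    forall rho, (rho < r)%nat -> Rabs (sumv F v (c rho)) < d.
Proof.
  intros Hd Hr. set (n := length F) in *.
  destruct (finite_bound (list_prod (seq 0 r) F) (fun p => Rabs (c (fst p) (snd p)))) as [L0 HL0].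
  set (L := Rmax L0 1).
  assert (HLpos : 0 < L) by (unfold L; pose proof (Rmax_r L0 1); lra).
  assert (HL : forall rho a, (rho < r)%nat -> In a F -> Rabs (c rho a) <= L).
  { intros rho a Hrho Ha. eapply Rle_trans; [|apply Rmax_l].
    apply (HL0 (rho, a)). apply in_prod; auto. apply in_seq; lia. }
  set (alpha := 2 * INR n * L / d).
  assert (Halpha : 0 <= alpha).
  { unfold alpha. pose proof (pos_INR n). apply Rmult_le_pos; [nra|]. left; apply Rinv_0_lt_compat; auto. }
  destruct (INR_unbounded alpha) as [C0 HC0].
  set (C := S C0).
  assert (HC : alpha + 1 < INR C) by (unfold C; rewrite S_INR; lra).
  set (M := (C ^ r)%nat).
  set (K := (C * S M)%nat).
  set (B := INR n * (INR M * L)).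
  assert (HB0 : 0 <= B) by (unfold B; pose proof (pos_INR n); pose proof (pos_INR M); 
    apply Rmult_le_pos; auto; apply Rmult_le_pos; lra).
  set (cell := fun x => Z.to_nat (up ((x + B) / d))).
  set (g := fun v => map (fun rho => cell (sumv F v (c rho))) (seq 0 r)).
  set (box := prodlist (map Z.of_nat (seq 0 (S M))) n).
  set (cells := prodlist (seq 0 K) r).
  assert (Hbox : forall v, In v box -> length v = n /\ forall rho, (rho < r)%nat ->
            Rabs (sumv F v (c rho)) <= B).
  { intros v Hv. destruct (prodlist_In_inv _ _ _ Hv) as [Hl Hs]. split; auto.
    intros rho Hrho. apply sumv_bound; try lra. apply pos_INR.
    - intros x Hx. apply Hs in Hx. apply in_map_iff in Hx. destruct Hx as [k [<- Hk]].
      apply in_seq in Hk. rewrite <- INR_IZR_INZ. split; [apply pos_INR|]. apply le_INR; lia.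
    - intros a Ha; apply HL; auto. }
  destruct (PH g box cells) as [v1 [v2 [H1 [H2 [Hne Heq]]]]].
  - apply prodlist_NoDup. apply NoDup_map_inj. apply seq_NoDup. intros; lia.
  - intros v Hv. destruct (Hbox v Hv) as [_ Hb]. apply prodlist_In.
    + unfold g. rewrite length_map, length_seq. auto.
    + intros y Hy. unfold g in Hy. apply in_map_iff in Hy. destruct Hy as [rho [<- Hrho]].
      apply in_seq in Hrho. specialize (Hb rho ltac:(lia)). apply Rabs_le_inv in Hb.
      apply in_seq. split; [lia|]. simpl plus. unfold cell.
      set (q := (sumv F v (c rho) + B) / d).
      assert (Hq0 : 0 <= q) by (unfold q; apply Rmult_le_pos; [lra|left; apply Rinv_0_lt_compat; auto]).
      assert (Hq1 : q <= alpha * INR M).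
      { replace (alpha * INR M) with (2 * B / d) by (unfold alpha, B; field; lra).
        unfold q, Rdiv. apply Rmult_le_compat_r; [left; apply Rinv_0_lt_compat; auto|lra]. }
      destruct (archimed q) as [Ha1 Ha2].
      apply INR_lt. rewrite INR_Z2N by (pose proof (up_pos q Hq0); lia).
      rewrite Nat.add_0_l. unfold K. rewrite mult_INR, S_INR. pose proof (pos_INR M). nra.
  - unfold cells, box. rewrite !prodlist_length, !length_map, !length_seq.
    unfold K. rewrite Nat.pow_mul_l. fold M.
    assert (0 < S M ^ r)%nat by (apply Nat.neq_0_lt_0, Nat.pow_nonzero; lia).
    assert (S M ^ S r <= S M ^ n)%nat by (apply Nat.pow_le_mono_r; lia).
    simpl in H0. nia.
  - destruct (Hbox v1 H1) as [Hl1 Hb1]. destruct (Hbox v2 H2) as [Hl2 Hb2].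
    exists (subZ v1 v2). split; [rewrite subZ_length; lia|]. split.
    + apply subZ_nonzero; auto; lia.
    + intros rho Hrho. rewrite sumv_sub by lia.
      assert (Hc : cell (sumv F v1 (c rho)) = cell (sumv F v2 (c rho))).
      { apply (map_eq_In (fun rho => cell (sumv F v1 (c rho))) (fun rho => cell (sumv F v2 (c rho))) (seq 0 r)).
        exact Heq. apply in_seq; lia. }
      specialize (Hb1 rho Hrho); specialize (Hb2 rho Hrho).
      apply Rabs_le_inv in Hb1; apply Rabs_le_inv in Hb2.
      unfold cell in Hc.
      set (q1 := (sumv F v1 (c rho) + B) / d) in *.
      set (q2 := (sumv F v2 (c rho) + B) / d) in *.
      assert (Hq1 : 0 <= q1) by (unfold q1; apply Rmult_le_pos; [lra|left; apply Rinv_0_lt_compat; auto]).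
      assert (Hq2 : 0 <= q2) by (unfold q2; apply Rmult_le_pos; [lra|left; apply Rinv_0_lt_compat; auto]).
      apply Z2Nat.inj in Hc; [|pose proof (up_pos q1 Hq1); lia|pose proof (up_pos q2 Hq2); lia].
      destruct (archimed q1); destruct (archimed q2). rewrite Hc in *.
      assert (Habs : Rabs (q1 - q2) < 1) by (apply Rabs_def1; lra).
      replace (sumv F v1 (c rho) - sumv F v2 (c rho)) with (d * (q1 - q2)) by (unfold q1, q2; field; lra).
      rewrite Rabs_mult, Rabs_right by lra. nra.
Qed.

Fixpoint lookup {X} (F : list X) (v : list Z) (a : X) : Z :=
  match F, v with
  | b :: F', x :: v' => if excluded_middle_informative (a = b) then x else lookup F' v' a
  | _, _ => 0%Z end.

Definition sumF {X} (F : list X) (z : X -> Z) (c : X -> R) : R :=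
  fold_right (fun a acc => IZR (z a) * c a + acc) 0 F.

Lemma sumF_ext {X} (F : list X) z1 z2 c : (forall a, In a F -> z1 a = z2 a) ->
  sumF F z1 c = sumF F z2 c.
Proof.
  induction F as [|b F IH]; intros H; simpl; auto.
  rewrite H by (simpl; auto). rewrite IH; auto. intros; apply H; simpl; auto.
Qed.

Lemma sumF_lookup {X} (F : list X) v c : NoDup F -> length v = length F ->
  sumF F (lookup F v) c = sumv F v c.
Proof.
  revert v; induction F as [|b F IH]; intros v Hnd Hl; destruct v as [|x v]; simpl in *; try lia; auto.
  inversion Hnd; subst.
  destruct (excluded_middle_informative (b = b)) as [_|Hbb]; [|congruence].
  f_equal. rewrite <- (IH v) by (auto; lia). apply sumF_ext.
  intros a Ha. destruct (excluded_middle_informative (a = b)) as [->|]; auto. contradiction.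
Qed.

Lemma lookup_map {X} (F : list X) v f a : f 0%Z = 0%Z -> lookup F (map f v) a = f (lookup F v a).
Proof.
  intro Hf; revert v; induction F as [|b F IH]; intros v; destruct v as [|x v]; simpl; auto.
  destruct (excluded_middle_informative (a = b)); auto.
Qed.

Lemma lookup_nonzero {X} (F : list X) v x : NoDup F -> length v = length F -> In x v ->
  exists a, In a F /\ lookup F v a = x.
Proof.
  revert v; induction F as [|b F IH]; intros v Hnd Hl Hx; destruct v as [|y v]; simpl in *; try lia; try tauto.
  inversion Hnd; subst. destruct Hx as [<-|Hx].
  + exists b. split; auto. destruct (excluded_middle_informative (b = b)); congruence.
  + destruct (IH v) as [a [Ha Hla]]; auto; try lia. exists a. split; auto.
    destruct (excluded_middle_informative (a = b)) as [->|]; auto. contradiction.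
Qed.

Lemma sumv_scale {X} (F : list X) v c s : sumv F (map (Z.mul s) v) c = IZR s * sumv F v c.
Proof.
  revert v; induction F as [|b F IH]; intros v; destruct v as [|x v]; simpl; try ring.
  rewrite IH, mult_IZR. ring.
Qed.

Lemma prod_pow_polar {I} (F : list (I -> C)) z j u t :
  (forall a, In a F -> a j = polar (u a) (t a)) ->
  prod_pow F z j = polar (sumF F z u) (sumF F z t).
Proof.
  unfold prod_pow. induction F as [|a F IH]; intros H; simpl.
  - symmetry; apply polar_0.
  - rewrite IH by (intros; apply H; simpl; auto). rewrite H by (simpl; auto).
    rewrite Czpow_polar, polar_mult. f_equal; ring.
Qed.

Definition theta (w : C) : R :=
  match excluded_middle_informative (exists t, w = polar (ln (Cmod w)) t) with
  | left H => proj1_sig (constructive_indefinite_description _ H)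
  | right _ => 0 end.

Lemma polar_theta w : w <> RtoC 0 -> w = polar (ln (Cmod w)) (theta w).
Proof.
  intro Hw. unfold theta.
  destruct (excluded_middle_informative _) as [H|H].
  - destruct (constructive_indefinite_description _ H); simpl; auto.
  - exfalso; apply H. destruct (polar_exists w Hw) as [u [t Ht]].
    exists t. rewrite Ht at 2. rewrite Cmod_polar, ln_exp. auto.
Qed.

Theorem lemma2p5 (I : Type) (HI : inhabited I) (A : (I -> C) -> Prop)
  (HA : forall a, A a -> in_group a) (Hind : top_indep A) :
  forall i : I, exists l : list (I -> C),
    forall a, A a -> Cmod (a i) <> 1 -> In a l.
Proof.
  intros i. apply NNPP. intro Hno.
  assert (Hpick : forall l, exists a, A a /\ Cmod (a i) <> 1 /\ ~ In a l).
  { intro l. apply NNPP; intro H. apply Hno. exists l. intros a Ha Hm.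
    apply NNPP; intro Hn. apply H; eauto. }
  assert (Hlist : forall k, exists F, length F = k /\ NoDup F /\
            forall a, In a F -> A a /\ Cmod (a i) <> 1).
  { induction k as [|k [F [HFl [HFn HFA]]]].
    - exists nil. split; [reflexivity|]. split; [constructor|]. intros a0 H0; destruct H0.
    - destruct (Hpick F) as [a [Ha [Hm Hn]]]. exists (a :: F). split; [simpl; lia|].
      split; [constructor; auto|]. intros b [<-|Hb]; auto. }
  destruct Hind as [_ Hind].
  set (W := fun x : I -> C => Cmod (Cminus (x i) (RtoC 1)) < /2).
  assert (HW : nbhd_e W).
  { exists (i :: nil), (/2). split; [lra|]. intros x _ Hx. apply Hx; simpl; auto. }
  destruct (Hind W HW) as [U [[J [eps [Heps HU]]] HUW]].
  destruct (near_lemma eps Heps) as [dl [Hdl Hnear]].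
  set (m := length J). set (r := (m + m)%nat).
  destruct (Hlist (S r)) as [F [HFl [HFnd HFA]]].
  set (c := fun rho (a : I -> C) => if Nat.ltb rho m then ln (Cmod (a (nth rho J i)))
                                   else theta (a (nth (rho - m) J i))).
  destruct (finite_bound F (fun a => / Rabs (ln (Cmod (a i))))) as [Q HQ].
  destruct (INR_unbounded Q) as [S0 HS0].
  set (Sn := S S0).
  assert (HSn : 0 < INR Sn) by (unfold Sn; rewrite S_INR; pose proof (pos_INR S0); lra).
  assert (HSQ : INR Sn > Q) by (unfold Sn; rewrite S_INR; lra).
  destruct (P0 F r c (dl / INR Sn)) as [v [Hvl [[x [Hxv Hx0]] Hvb]]].
  { apply Rdiv_lt_0_compat; auto. }
  { lia. }
  set (z := lookup F (map (Z.mul (Z.of_nat Sn)) v)).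
  assert (Hpol : forall a j, In a F -> a j = polar (ln (Cmod (a j))) (theta (a j))).
  { intros a j Ha. apply polar_theta. apply (HA a). apply HFA; auto. }
  assert (Hprod : forall j, prod_pow F z j =
     polar (sumF F z (fun a => ln (Cmod (a j)))) (sumF F z (fun a => theta (a j)))).
  { intro j. apply prod_pow_polar. intros a Ha; apply Hpol; auto. }
  assert (Hsum : forall cc, sumF F z cc = INR Sn * sumv F v cc).
  { intro cc. unfold z. rewrite sumF_lookup; auto; [|rewrite length_map; lia].
    rewrite sumv_scale, <- INR_IZR_INZ. auto. }
  assert (Hsmall : forall rho, (rho < r)%nat -> Rabs (sumF F z (c rho)) < dl).
  { intros rho Hrho. rewrite Hsum, Rabs_mult, Rabs_right by lra.
    specialize (Hvb rho Hrho).
    apply (Rmult_lt_compat_l (INR Sn)) in Hvb; auto.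
    replace (INR Sn * (dl / INR Sn)) with dl in Hvb by (field; lra). auto. }
  assert (HUp : U (prod_pow F z)).
  { apply HU.
    - intro j. rewrite Hprod. apply polar_neq0.
    - intros j Hj. rewrite Hprod. destruct (In_nth J j i Hj) as [k [Hk Hkj]].
      apply Hnear.
      + replace (fun a : I -> C => ln (Cmod (a j))) with (c k).
        * apply Hsmall. unfold r, m in *; lia.
        * apply functional_extensionality. intro a. unfold c.
          replace (Nat.ltb k m) with true by (symmetry; apply Nat.ltb_lt; auto). rewrite Hkj; auto.
      + replace (fun a : I -> C => theta (a j)) with (c (k + m)%nat).
        * apply Hsmall. unfold r, m in *; lia.
        * apply functional_extensionality. intro a. unfold c.
          replace (Nat.ltb (k + m) m) with false by (symmetry; apply Nat.ltb_ge; lia).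
          replace (k + m - m)%nat with k by lia. rewrite Hkj; auto. }
  assert (HFA' : forall a, In a F -> A a) by (intros a Ha; apply HFA; auto).
  specialize (HUW F z HFnd HFA' HUp).
  destruct (lookup_nonzero F v x HFnd ltac:(lia) Hxv) as [a0 [Ha0 Hla0]].
  specialize (HUW a0 Ha0). unfold W, zpow_grp in HUW.
  assert (Hza : z a0 = (Z.of_nat Sn * x)%Z).
  { unfold z. rewrite lookup_map by lia. rewrite Hla0. auto. }
  rewrite (Hpol a0 i Ha0), Czpow_polar in HUW.
  destruct (HFA a0 Ha0) as [HAa Hmod].
  assert (Hln : ln (Cmod (a0 i)) <> 0).
  { intro H0. apply Hmod. assert (Hp : 0 < Cmod (a0 i)) by (apply Cmod_gt_0; apply (HA a0 HAa)).
    rewrite <- (exp_ln _ Hp), H0, exp_0. auto. }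
  assert (Hfar : 1 <= Rabs (IZR (z a0) * ln (Cmod (a0 i)))).
  { rewrite Hza, mult_IZR, <- INR_IZR_INZ, !Rabs_mult, (Rabs_right (INR Sn)) by lra.
    assert (1 <= Rabs (IZR x)).
    { rewrite Rabs_Zabs. apply IZR_le. lia. }
    pose proof (HQ a0 Ha0). simpl in H0.
    assert (Hlp : 0 < Rabs (ln (Cmod (a0 i)))) by (apply Rabs_pos_lt; auto).
    assert (INR Sn * Rabs (ln (Cmod (a0 i))) > 1).
    { apply (Rmult_lt_compat_r (Rabs (ln (Cmod (a0 i))))) in HSQ; auto.
      assert (Q * Rabs (ln (Cmod (a0 i))) >= 1).
      { apply Rle_ge. apply (Rmult_le_compat_r (Rabs (ln (Cmod (a0 i))))) in H0; [|lra].
        rewrite Rinv_l in H0 by lra. auto. }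
      lra. }
    nra. }
  pose proof (far_lemma _ (IZR (z a0) * theta (a0 i)) Hfar). lra.
Qed.
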